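(* Let $(X,d)$ be a separable metric space, $T\colon X\to X$ a Borel measurable map and $\mu$ a $T$-invariant Borel probability measure on $X$ such that $(X,T,\mu)$ is weakly mixing. Let $(s_n)_{n\ge1}$ be a scale sequence which is either monotone or steady. Then the proximality gauge $\psi(x,y)=\liminf_{n\to\infty} s_n\, d(T^nx,T^ny)$ is $\mu\times\mu$-almost everywhere constant (its push-forward of $\mu\times\mu$ is a Dirac measure on $[0,\infty]$). In particular, writing $\psi_\alpha(x,y)=\liminf_{n} n^\alpha d(T^nx,T^ny)$ and \[C_\psi=\sup\big(\{0\}\cup\{\alpha>0:\ \psi_\alpha(x,y)=0 \text{ for } \mu\times\mu\text{-a.e. }(x,y)\}\big),\] one has $\psi_\alpha=0$ $\mu\times\mu$-a.e. if $0\le\alpha<C_\psi$, and $\psi_\alpha=\infty$ $\mu\times\mu$-a.e. if $C_\psi<\alpha<\infty$.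
   Context: A scale sequence is a sequence $(s_n)_{n\ge1}$ of positive reals with $s_n\to\infty$. It is monotone if $s_{n+1}\ge s_n$ for all sufficiently large $n$, and steady if $\lim_{n\to\infty}s_{n+1}/s_n=1$. Weakly mixing means $T\times T$ is ergodic with respect to $\mu\times\mu$. *)

(* Defs.v *)
From HB Require Import structures.
From mathcomp Require Import all_boot all_order all_algebra.
From mathcomp Require Import all_classical all_reals all_analysis.
Set Implicit Arguments. Unset Strict Implicit. Unset Printing Implicit Defensive.
Import Order.TTheory GRing.Theory Num.Theory.
Import numFieldNormedType.Exports.
Local Open Scope classical_set_scope.
Local Open Scope ring_scope.

Section defs.
Context {R : realType} {X : Type}.

Definition is_metric (dist : X -> X -> R) : Prop :=
  [/\ forall x y, 0 <= dist x y,
      forall x y, dist x y = 0 <-> x = y,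
      forall x y, dist x y = dist y x &
      forall x y z, dist x z <= dist x y + dist y z].

Definition metric_open (dist : X -> X -> R) (A : set X) : Prop :=
  forall x, A x -> exists2 e : R, 0 < e & [set y | dist x y < e] `<=` A.

Definition metric_separable (dist : X -> X -> R) : Prop :=
  exists D : set X, countable D /\
    forall x (e : R), 0 < e -> exists2 y, D y & dist x y < e.
End defs.

(* scale sequence, indexed by n >= 1 (the value s 0 is irrelevant) *)
Definition scale_sequence {R : realType} (s : nat -> R) : Prop :=
  (forall n, (0 < n)%N -> 0 < s n) /\ s @ \oo --> +oo.

Definition monotone_seq {R : realType} (s : nat -> R) : Prop :=
  exists N, forall n, (N <= n)%N -> s n <= s n.+1.

Definition steady_seq {R : realType} (s : nat -> R) : Prop :=
  (fun n => s n.+1 / s n) @ \oo --> (1 : R).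

Definition prox_gauge {R : realType} {X : Type} (dist : X -> X -> R)
  (T : X -> X) (s : nat -> R) (z : X * X) : \bar R :=
  limn_einf (fun n => (s n * dist (iter n T z.1) (iter n T z.2))%:E).

Definition prox_gauge_pow {R : realType} {X : Type} (dist : X -> X -> R)
  (T : X -> X) (alpha : R) : X * X -> \bar R :=
  prox_gauge dist T (fun n => (n%:R) `^ alpha).

Definition prod_map {X : Type} (T : X -> X) (z : X * X) : X * X :=
  (T z.1, T z.2).

(* Main.v *)
Require Import Defs.
From HB Require Import structures.
From mathcomp Require Import all_boot all_order all_algebra.
From mathcomp Require Import all_classical all_reals all_analysis.
From mathcomp Require Import measurable_realfun.
From mathcomp Require Import lra.
Import Order.TTheory GRing.Theory Num.Theory numFieldNormedType.Exports.
Local Open Scope classical_set_scope.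
Local Open Scope ring_scope.

Section liminf.
Context {R : realType}.
Local Open Scope ereal_scope.
Implicit Types (u v : nat -> \bar R).

Lemma lte_real_between (z w : \bar R) : z < w -> exists y : R, z < y%:E < w.
Proof.
case: z => [z||]; case: w => [w||] //=.
- move=> zw; exists ((z + w) / 2)%R; rewrite !lte_fin; by have [-> ->] := midf_lt zw.
- by move=> _; exists (z + 1)%R; rewrite ltry andbT lte_fin ltrDl.
- by move=> _; exists (w - 1)%R; rewrite ltNyr /= lte_fin; lra.
- by move=> _; exists 0%R; rewrite ltNyr ltry.
Qed.

Lemma le_via_real (w z : \bar R) :
  (forall y : R, y%:E < w -> y%:E <= z) -> w <= z.
Proof.
move=> H; rewrite leNgt; apply/negP => zw.
have [y /andP[zy yw]] := lte_real_between _ _ zw.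
by move: (H y yw); rewrite leNgt zy.
Qed.

Lemma limn_einfE u : limn_einf u = ereal_sup (range (einfs u)).
Proof. by rewrite limn_einf_lim; apply/cvg_lim => //; exact: cvg_einfs_sup. Qed.

Lemma liminf_gt u y : y < limn_einf u -> exists N, forall n, (N <= n)%N -> y < u n.
Proof.
rewrite limn_einfE => /ereal_sup_gtP [_ [N _ <-] yl].
exists N => n Nn; apply: (lt_le_trans yl) => /=.
by apply: ereal_inf_lbound; exists n.
Qed.

Lemma liminf_ge u w :
  (forall y : R, y%:E < w -> exists N, forall n, (N <= n)%N -> y%:E < u n) ->
  w <= limn_einf u.
Proof.
move=> H; apply: le_via_real => y /H [N HN].
rewrite limn_einfE; apply: (@le_trans _ _ (einfs u N)); last by apply: ereal_sup_ubound; exists N.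
apply/ereal_infP => _ [n /= Nn <-]; exact/ltW/HN.
Qed.

Lemma liminf_le_ev u v N : (forall n, (N <= n)%N -> u n <= v n) ->
  limn_einf u <= limn_einf v.
Proof.
move=> uv; apply: liminf_ge => y /liminf_gt [M HM].
exists (maxn N M) => n; rewrite geq_max => /andP[Nn Mn].
exact: lt_le_trans (HM _ Mn) (uv _ Nn).
Qed.

Lemma liminf_shift u : limn_einf (fun n => u n.+1) = limn_einf u.
Proof.
apply/eqP; rewrite eq_le; apply/andP; split; apply: liminf_ge => y /liminf_gt [N HN].
- by exists N.+1 => -[|n]// Nn; exact: HN.
- by exists N => n Nn; apply: HN; exact: leqW.
Qed.

Lemma liminf_ge0 u : (forall n, 0 <= u n) -> 0 <= limn_einf u.
Proof.
move=> u0; apply: liminf_ge => y y0; exists 0%N => n _.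
exact: lt_le_trans y0 (u0 n).
Qed.


End liminf.

Section liminf2.
Context {R : realType}.
Lemma liminf_mulc (c b : nat -> R) N : c @ \oo --> (1:R) ->
  (forall n, (N <= n)%N -> (0 <= b n)%R) ->
  (limn_einf (fun n => (b n)%:E) <= limn_einf (fun n => (c n * b n)%:E))%E.
Proof.
move=> Hc b0; apply: liminf_ge => y yL.
have [M _ HM] := @cvgr_gt _ _ _ _ _ _ Hc 0 ltr01.
have [y0|y0] := ltP y 0.
  exists (maxn N M) => n; rewrite geq_max => /andP[Nn Mn].
  rewrite lte_fin; apply: (lt_le_trans y0); rewrite mulr_ge0//; last exact: b0.
  exact/ltW/HM.
have [y' /andP[yy' y'L]] := lte_real_between _ _ yL.
have y'0 : (0 < y')%R by rewrite -lte_fin (le_lt_trans _ yy')// lee_fin.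
have [K HK] := liminf_gt _ _ y'L.
have [|M' _ HM'] := @cvgr_gt _ _ _ _ _ _ Hc (y / y') _.
  by rewrite ltr_pdivrMr// mul1r -lte_fin.
exists (maxn K M') => n; rewrite geq_max => /andP[Kn Mn].
have := HK _ Kn; rewrite !lte_fin => y'b.
have cpos : 0 < c n by apply: le_lt_trans (HM' _ Mn); rewrite divr_ge0// ltW.
apply: (lt_le_trans (y := c n * y')); last first.
  by rewrite ler_pM2l// ltW.
by rewrite -ltr_pdivrMr//; exact: HM'.
Qed.
End liminf2.

Section gauge.
Context {R : realType} {X : Type} (dist : X -> X -> R) (T : X -> X).
Hypothesis d0 : forall x y, 0 <= dist x y.

Definition gauge_e (z : X * X) n := dist (iter n.+1 T z.1) (iter n.+1 T z.2).

Lemma gaugeS s z : prox_gauge dist T s (prod_map T z) =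
  limn_einf (fun n => (s n * gauge_e z n)%:E).
Proof. by rewrite /prox_gauge /gauge_e /=; congr limn_einf; apply/funext => n; rewrite -!iterS !iterSr. Qed.

Lemma gauge0 s z : prox_gauge dist T s z =
  limn_einf (fun n => (s n.+1 * gauge_e z n)%:E).
Proof. by rewrite /prox_gauge -(liminf_shift (fun n => (s n * dist (iter n T z.1) (iter n T z.2))%:E)). Qed.

Lemma gauge_mono s z : monotone_seq s ->
  (prox_gauge dist T s (prod_map T z) <= prox_gauge dist T s z)%E.
Proof.
move=> [N HN]; rewrite gaugeS gauge0; apply: (liminf_le_ev _ _ N) => n Nn.
by rewrite lee_fin ler_wpM2r // ?HN// /gauge_e.
Qed.

Lemma gauge_steady s z : scale_sequence s -> steady_seq s ->
  prox_gauge dist T s (prod_map T z) = prox_gauge dist T s z.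
Proof.
move=> [spos _] Hs; rewrite gaugeS gauge0; apply/eqP; rewrite eq_le; apply/andP; split.
- apply: le_trans (liminf_mulc (fun n => s n.+1 / s n) _ 1 Hs _) _.
    by move=> n n1; apply: mulr_ge0; [exact/ltW/spos | exact: d0].
  apply: (liminf_le_ev _ _ 1) => n n1; rewrite mulrA divfK//.
  by rewrite gt_eqF// spos.
- have Hs' : (fun n => s n / s n.+1) @ \oo --> (1:R).
    have := @cvgV R nat \oo _ _ 1 (oner_neq0 _) Hs; rewrite invr1.
    move=> H; have {}H := H _.
    rewrite -(eq_cvg _ _ (fun n => invf_div (s n.+1) (s n))).
    exact: H.
  apply: le_trans (liminf_mulc _ _ 0 Hs' _) _.
    by move=> n _; apply: mulr_ge0; [exact/ltW/spos | exact: d0].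
  apply: (liminf_le_ev _ _ 1) => n n1; rewrite mulrA divfK//.
  by rewrite gt_eqF// spos.
Qed.

End gauge.

Lemma exists_nat_gt {R : realType} (y : R) : exists n : nat, y < n%:R.
Proof.
have [y0|y0] := ltP y 0; first by exists 0%N.
by exists (Num.Def.archi_bound y); exact: archi_boundP.
Qed.

Lemma approx_below {R : realType} (c : \bar R) : c != -oo%E ->
  exists r : nat -> R, (forall n, ((r n)%:E < c)%E) /\
    (forall y : R, (y%:E < c)%E -> exists n, y < r n).
Proof.
case: c => [c||] // _.
- exists (fun n => c - n.+1%:R^-1); split.
    by move=> n; rewrite lte_fin ltrBlDr ltrDl invr_gt0 ltr0n.
  move=> y; rewrite lte_fin => yc.
  have [n Hn] := exists_nat_gt (c - y)^-1.
  exists n.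
  have H1 : (c - y)^-1 < n.+1%:R by apply: lt_le_trans Hn _; rewrite ler_nat.
  have : n.+1%:R^-1 < c - y.
    by rewrite -invf_plt// posrE ?subr_gt0// ltr0n.
  move: (n.+1%:R^-1) => t; lra.
- exists (fun n => n%:R); split; first by move=> n; rewrite ltry.
  by move=> y _; exact: exists_nat_gt.
Qed.

Section aeconst.
Local Open Scope ereal_scope.
Context {R : realType} {d} {Y : measurableType d} (P : probability Y R)
  (f : Y -> \bar R).
Hypothesis mf : measurable_fun setT f.
Hypothesis H01 : forall r : R,
  P [set z | f z < r%:E] = 0 \/ P [set z | f z < r%:E] = 1.

Let mA (r : R) : measurable [set z | f z < r%:E].
Proof. by rewrite -[X in measurable X]setTI; exact: emeasurable_fun_infty_o. Qed.

Lemma ae_const_of01 : exists c, {ae P, forall z, f z = c}.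
Proof.
pose S := [set r : R | P [set z | f z < r%:E] = 0].
pose c := ereal_sup (EFin @` S).
have hlow : {ae P, forall z, c <= f z}.
  have [->|cNy] := eqVneq c -oo; first by apply: aeW => z; exact: leNye.
  have [r [rc rdense]] := approx_below _ cNy.
  have : {ae P, forall z, forall n, (r n)%:E <= f z}.
    apply: ae_foralln => n.
    have /ereal_sup_gtP [_ [s Ss <-] rs] := rc n.
    exists [set z | f z < s%:E]; split; [exact: mA | exact: Ss | ].
    move=> z /= /negP; rewrite -ltNge => h; exact: lt_trans h rs.
  apply: filterS => z Hz; apply: le_via_real => y /rdense [n yn].
  by apply: le_trans (Hz n); rewrite lee_fin ltW.
have hup : {ae P, forall z, f z <= c}.
  have [->|cy] := eqVneq c +oo; first by apply: aeW => z; exact: leey.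
  have [r [rc rdense]] := @approx_below R (- c) ltac:(by rewrite eqe_oppLR).
  have : {ae P, forall z, forall n, f z < (- r n)%:E}.
    apply: ae_foralln => n.
    have tS : ~ S (- r n)%R.
      move=> Sn; have : (- r n)%:E <= c by apply: ereal_sup_ubound; exists (- r n)%R.
      by rewrite EFinN leeNl leNgt rc.
    have P1 : P [set z | f z < (- r n)%:E] = 1.
      by case: (H01 (- r n)%R) => // /tS.
    exists (~` [set z | f z < (- r n)%:E]); split.
    - exact: measurableC.
    - by have := probability_setC P (mA (- r n)%R); rewrite P1 subee.
    - by [].
  apply: filterS => z Hz; rewrite leNgt; apply/negP => cf.
  have [y /andP[cy' yf]] := lte_real_between _ _ cf.
  have [n yn] := rdense (- y)%R ltac:(by rewrite EFinN lteNl oppeK).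
  have := Hz n; rewrite ltNge => /negP; apply.
  by apply: le_trans (ltW yf); rewrite lee_fin lerNl ltW.
exists c; apply: filterS2 hlow hup => z h1 h2.
by apply/eqP; rewrite eq_le h1 h2.
Qed.

End aeconst.

Lemma prod_invariant (d : measure_display) (X : measurableType d) (R : realType)
  (mu : probability X R) (T : X -> X) (HT : measurable_fun setT T)
  (Hinv : forall A, measurable A -> mu (T @^-1` A) = mu A)
  (B : set (X * X)) : measurable B ->
  (mu \x mu)%E (prod_map T @^-1` B) = (mu \x mu)%E B.
Proof.
move=> mB; rewrite /product_measure1 /=.
transitivity (\int[mu]_x (mu \o xsection B) (T x))%E.
  apply: eq_integral => x _ /=.
  rewrite (_ : xsection (prod_map T @^-1` B) x = T @^-1` xsection B (T x)).
    by rewrite Hinv//; exact: measurable_xsection.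
  by rewrite !xsectionE.
transitivity (\int[pushforward mu T]_u (mu \o xsection B) u)%E.
  rewrite ge0_integral_pushforward//.
  exact: (@measurable_fun_xsection _ _ X X R mu B mB).
by apply: eq_measure_integral => A mA _; exact: Hinv.
Qed.

Lemma measurable_iter (d : measure_display) (Y : measurableType d) (S : Y -> Y)
  (mS : measurable_fun setT S) k : measurable_fun setT (iter k S).
Proof.
elim: k => [|k IH] /=; first exact: measurable_id.
exact: measurableT_comp.
Qed.

Lemma sub_invariant_01 (d : measure_display) (Y : measurableType d) (R : realType)
  (P : probability Y R) (S : Y -> Y) (mS : measurable_fun setT S)
  (Pinv : forall B, measurable B -> P (S @^-1` B) = P B)
  (Herg : forall B, measurable B -> S @^-1` B = B -> P B = 0%E \/ P B = 1%E)
  (A : set Y) (mA : measurable A) (sub : A `<=` S @^-1` A) :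
  P A = 0%E \/ P A = 1%E.
Proof.
pose F k := iter k S @^-1` A.
have mF k : measurable (F k).
  by rewrite /F -[X in measurable X]setTI; apply: measurable_iter.
have PF k : P (F k) = P A.
  elim: k => [//|k IH].
  rewrite /F (_ : iter k.+1 S @^-1` A = S @^-1` (iter k S @^-1` A)).
    by rewrite Pinv; [exact: IH | exact: (mF k)].
  by apply/funext => z; rewrite /preimage /=; congr (A _); exact: (iterSr k S z).
have incF k : F k `<=` F k.+1.
  by move=> z; rewrite /F /preimage /= => h; exact: sub.
have mB : measurable (\bigcup_k F k) by exact: bigcupT_measurable.
have PB : P (\bigcup_k F k) = P A.
  have ndF : nondecreasing_seq F.
    by apply/nondecreasing_seqP => k; apply/subsetPset.
  have h := @nondecreasing_cvg_mu _ _ R P F mF mB ndF.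
  rewrite -(cvg_lim _ h) // (_ : P \o F = cst (P A)); first exact: lim_cst.
  by apply/funext => k /=; rewrite PF.
rewrite -PB; apply: Herg => //.
apply/seteqP; split => z /=.
- move=> [k _ h]; exists k.+1 => //; rewrite /F /preimage /=.
  by have <- : iter k S (S z) = S (iter k S z) by exact: (esym (iterSr k S z)).
- move=> [[|k] _ h].
    by exists 0%N => //; exact: sub.
  exists k => //; move: h; rewrite /F /preimage /=.
  by have -> : S (iter k S z) = iter k S (S z) by exact: (iterSr k S z).
Qed.

Lemma ge_via_real {R : realType} (w z : \bar R) :
  (forall y : R, (w < y%:E)%E -> (z <= y%:E)%E) -> (z <= w)%E.
Proof.
move=> H; rewrite leNgt; apply/negP => zw.
have [y /andP[zy yw]] := lte_real_between _ _ zw.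
by move: (H y zy); rewrite leNgt yw.
Qed.

Section meas.
Context {R : realType} {d : measure_display} {X : measurableType d}
  (dist : X -> X -> R).
Hypothesis Hmetric : is_metric dist.
Hypothesis Hborel : @measurable d X = <<s [set A | metric_open dist A] >>.

Lemma measurable_open A : metric_open dist A -> measurable A.
Proof. by move=> oA; rewrite Hborel; exact: sub_sigma_algebra. Qed.

Lemma measurable_distE (p : X) : measurable_fun setT (fun x => (dist p x)%:E).
Proof.
have [d0 deq dsym dtri] := Hmetric.
apply: (measurability _ (ErealGenOInfty.measurableE R)) => //.
move=> _ [_ [r ->] <-]; rewrite setTI.
apply: measurable_open => x /=; rewrite in_itv /= andbT lte_fin => rx.
exists (dist p x - r); first by rewrite subr_gt0.
move=> y /= hxy; rewrite in_itv /= andbT lte_fin.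
have := dtri p y x; rewrite (dsym y x); lra.
Qed.

Lemma measurable_distR (p : X) : measurable_fun setT (fun x => dist x p).
Proof.
have [d0 deq dsym dtri] := Hmetric.
apply/measurable_EFinP.
rewrite (_ : _ \o _ = fun x => (dist p x)%:E); first exact: measurable_distE.
by apply/funext => x /=; rewrite dsym.
Qed.

Lemma measurable_distL (p : X) : measurable_fun setT (fun x => dist p x).
Proof. exact/measurable_EFinP/measurable_distE. Qed.

Hypothesis Hsep : metric_separable dist.
Variable x0 : X.

Lemma measurable_dist2 : measurable_fun setT (fun z : X * X => dist z.1 z.2).
Proof.
have [d0 deq dsym dtri] := Hmetric.
have [D [cD dD]] := Hsep.
have [f injf] := countable_injP _ cD.
pose e n := 'pinv_(cst x0) D f n.
have eK p : D p -> e (f p) = p by move=> Dp; apply: pinvKV => //; rewrite inE.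
pose g n (z : X * X) := (dist z.1 (e n) + dist (e n) z.2)%:E.
have mg n : measurable_fun setT (g n).
  apply/measurable_EFinP; apply: measurable_funD.
  - exact: measurableT_comp (measurable_distR _) measurable_fst.
  - exact: measurableT_comp (measurable_distL _) measurable_snd.
apply/measurable_EFinP.
rewrite (_ : _ \o _ = fun z => einfs (g ^~ z) 0).
  exact: measurable_fun_einfs.
apply/funext => z /=; apply/eqP; rewrite eq_le; apply/andP; split.
- apply/ereal_infP => _ [n _ <-]; rewrite /g lee_fin; exact: dtri.
- apply: ge_via_real => y dy; rewrite lte_fin in dy.
  have [p Dp hp] := dD z.1 ((y - dist z.1 z.2) / 2) ltac:(lra).
  apply: (@le_trans _ _ (g (f p) z)).
    by apply: ereal_inf_lbound; exists (f p).
  rewrite /g eK // lee_fin.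
  have := dtri p z.1 z.2; rewrite (dsym p z.1); lra.
Qed.

End meas.

Lemma measurable_iterX (d : measure_display) (Y : measurableType d) (S : Y -> Y)
  (mS : measurable_fun setT S) k : measurable_fun setT (iter k S).
Proof.
elim: k => [|k IH] /=; first exact: measurable_id.
exact: measurableT_comp.
Qed.

Lemma measurable_gauge {R : realType} {d : measure_display} {X : measurableType d}
  (dist : X -> X -> R) (T : X -> X) (s : nat -> R) :
  measurable_fun setT (fun z : X * X => dist z.1 z.2) ->
  measurable_fun setT T ->
  measurable_fun setT (prox_gauge dist T s).
Proof.
move=> md mT; rewrite /prox_gauge /limn_einf.
apply: measurableT_comp => //.
apply: (measurable_fun_limn_esup (f := fun n z => - (s n * dist (iter n T z.1) (iter n T z.2))%:E)%E).
move=> n; apply: measurableT_comp => //.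
apply/measurable_EFinP; apply: measurable_funM => //.
apply: (measurableT_comp md (g := fun z : X * X => (iter n T z.1, iter n T z.2))).
apply: measurable_fun_pair.
- exact: measurableT_comp (@measurable_iterX _ _ _ mT n) measurable_fst.
- exact: measurableT_comp (@measurable_iterX _ _ _ mT n) measurable_snd.
Qed.

Section pow.
Context {R : realType}.

Lemma pow_large (g K : R) : 0 < g ->
  exists N : nat, forall n, (N <= n)%N -> K < n%:R `^ g.
Proof.
move=> g0; pose M := Num.max K 1.
pose t := M `^ g^-1.
have [N HN] := exists_nat_gt t.
exists N => n Nn.
have tn : t < n%:R by apply: lt_le_trans HN _; rewrite ler_nat.
have M1 : 1 <= M by rewrite le_max lexx orbT.
have tM : t `^ g = M.
  by rewrite /t -powRrM mulVf ?gt_eqF// powRr1// (le_trans ler01 M1).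
apply: (@le_lt_trans _ _ M); first by rewrite le_max lexx.
rewrite -tM; apply: gt0_ltr_powR => //.
- by rewrite nnegrE powR_ge0.
- by rewrite nnegrE (le_trans _ (ltW tn))// powR_ge0.
Qed.

Lemma scale_pow (a : R) : 0 < a -> scale_sequence (fun n : nat => n%:R `^ a).
Proof.
move=> a0; split.
  by move=> n n0; apply: powR_gt0; rewrite ltr0n.
apply/cvgryPgt => K; have [N HN] := pow_large a K a0.
by exists N => // n /= Nn; exact: HN.
Qed.

Lemma mono_pow (a : R) : 0 <= a -> monotone_seq (fun n : nat => n%:R `^ a).
Proof.
move=> a0; exists 0%N => n _.
by apply: ge0_ler_powR => //; rewrite ?nnegrE ?ler0n// ler_nat.
Qed.

Lemma pow_le (a b : R) (n : nat) : (0 < n)%N -> a <= b -> n%:R `^ a <= n%:R `^ b.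
Proof. by move=> n0 ab; apply: ler_powR => //; rewrite ler1n. Qed.

End pow.

Section gpow.
Context {R : realType} {X : Type} (dist : X -> X -> R) (T : X -> X).
Hypothesis d0 : forall x y, 0 <= dist x y.

Lemma gpow_ge0 a z : (0 <= prox_gauge_pow dist T a z)%E.
Proof. by apply: liminf_ge0 => n; rewrite lee_fin mulr_ge0// powR_ge0. Qed.

Lemma gpow_le a b z : a <= b ->
  (prox_gauge_pow dist T a z <= prox_gauge_pow dist T b z)%E.
Proof.
move=> ab; apply: (liminf_le_ev _ _ 1) => n n1.
by rewrite lee_fin ler_wpM2r// pow_le.
Qed.

Lemma gpow_zero a b z : b < a -> (prox_gauge_pow dist T a z < +oo)%E ->
  prox_gauge_pow dist T b z = 0%E.
Proof.
move=> ba Lfin.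
pose D n := dist (iter n T z.1) (iter n T z.2).
apply/eqP; rewrite eq_le gpow_ge0 andbT leNgt; apply/negP => vpos.
have [y /andP[y0 yv]] := lte_real_between _ _ vpos.
rewrite lte_fin in y0.
have [K HK] := liminf_gt _ _ yv.
have [M LM] : exists M : R, (prox_gauge_pow dist T a z < M%:E)%E.
  move: Lfin; case: (prox_gauge_pow dist T a z) => [r||] // _.
  - by exists (r + 1); rewrite lte_fin ltrDl.
  - by exists 0; rewrite ltNyr.
have notev : forall N, exists n, (N <= n)%N /\ (n%:R `^ a * D n <= M).
  move=> N; apply: contrapT => hN.
  have : (M%:E <= prox_gauge_pow dist T a z)%E.
    apply: liminf_ge => y' y'M; exists N => n Nn.
    rewrite lte_fin (lt_trans (y:=M))// -?lte_fin//.
    rewrite ltNge; apply/negP => h; apply: hN; exists n; split => //.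
  by rewrite leNgt LM.
have [N1 HN1] := pow_large (a - b) (M / y) ltac:(by rewrite subr_gt0).
have [n [Nn un]] := notev (maxn (maxn K N1) 1).
move: Nn; rewrite !geq_max => /andP[/andP[Kn N1n] n1].
have := HK n Kn; rewrite lte_fin => vn.
have Pn := HN1 n N1n.
have ab : n%:R `^ a = n%:R `^ (a - b) * n%:R `^ b.
  by rewrite -powRD ?subrK// pnatr_eq0 -lt0n n1 implybT.
move: un; rewrite ab -mulrA; apply/negP; rewrite -ltNge.
have Ppos : 0 < n%:R `^ (a - b) by apply: powR_gt0; rewrite ltr0n.
apply: (@lt_le_trans _ _ (n%:R `^ (a - b) * y)).
  by rewrite -ltr_pdivrMr.
by rewrite ler_wpM2l// ltW.
Qed.

End gpow.

Theorem proposition3p9 (dX : measure_display) (X : measurableType dX)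
  (R : realType) (dist : X -> X -> R)
  (Hmetric : is_metric dist)
  (Hsep : metric_separable dist)
  (Hborel : @measurable dX X = <<s [set A | metric_open dist A] >>)
  (T : X -> X) (HT : measurable_fun [set: X] T)
  (mu : probability X R)
  (Hinv : forall A, measurable A -> mu (T @^-1` A) = mu A)
  (Hwm : forall B : set (X * X), measurable B ->
      prod_map T @^-1` B = B ->
      ((mu \x mu)%E B = 0%E \/ (mu \x mu)%E B = 1%E)) :
  (forall s : nat -> R, scale_sequence s -> (monotone_seq s \/ steady_seq s) ->
     exists c : \bar R, {ae (mu \x mu)%E, forall z, prox_gauge dist T s z = c})
  /\
  (let Cpsi : \bar R :=
     ereal_sup ([set 0%E] `|`
       [set (a%:E) | a in [set a : R | 0 < a /\
          {ae (mu \x mu)%E, forall z, prox_gauge_pow dist T a z = 0%E}]]) in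
   (forall alpha : R, 0 <= alpha -> (alpha%:E < Cpsi)%E ->
      {ae (mu \x mu)%E, forall z, prox_gauge_pow dist T alpha z = 0%E}) /\
   (forall alpha : R, (Cpsi < alpha%:E)%E ->
      {ae (mu \x mu)%E, forall z, prox_gauge_pow dist T alpha z = +oo%E})).
Proof.
have d0 : forall x y, 0 <= dist x y by case: Hmetric.
have [x0 _] : [set: X] !=set0.
  apply/set0P/eqP => h; have := probability_setT mu.
  by rewrite h measure0 => /eqP; rewrite eq_sym; apply/negP; exact: oner_neq0.
have md := @measurable_dist2 _ _ _ dist Hmetric Hborel Hsep x0.
have mS : measurable_fun setT (prod_map T).
  apply: measurable_fun_pair.
  - exact: measurableT_comp HT measurable_fst.
  - exact: measurableT_comp HT measurable_snd.
have part1 : forall s : nat -> R, scale_sequence s -> (monotone_seq s \/ steady_seq s) ->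
     exists c : \bar R, {ae (mu \x mu)%E, forall z, prox_gauge dist T s z = c}.
  move=> s ss hs.
  have mf := measurable_gauge dist T s md HT.
  apply: (@ae_const_of01 R _ _ (mu \x mu)%E _ mf) => r.
  have mA : measurable [set z | (prox_gauge dist T s z < r%:E)%E].
    by rewrite -[X in measurable X]setTI; exact: emeasurable_fun_infty_o.
  case: hs => [hm|hst].
  - apply: (@sub_invariant_01 _ _ R (mu \x mu)%E (prod_map T) mS (@prod_invariant _ _ R mu T HT Hinv) Hwm _ mA).
    move=> z /= h; exact: le_lt_trans (gauge_mono _ _ d0 _ _ hm) h.
  - apply: Hwm => //; apply/funext => z /=.
    by rewrite /preimage /= gauge_steady.
split => //.
move=> Cpsi.
have C0 : (0 <= Cpsi)%E by apply: ereal_sup_ubound; left.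
split.
- move=> alpha a0 /ereal_sup_gtP [y [-> | [a [apos hae] <-]]] ya.
    by move: ya; rewrite lte_fin ltNge a0.
  apply: filterS hae => z hz; apply/eqP; rewrite eq_le gpow_ge0// andbT -hz.
  by apply: gpow_le => //; apply/ltW; rewrite -lte_fin.
- move=> alpha Ca.
  have a0 : 0 < alpha by rewrite -lte_fin (le_lt_trans C0 Ca).
  have [c hc] := part1 _ (scale_pow alpha a0) (or_introl (mono_pow alpha (ltW a0))).
  have [cy|cy] := eqVneq c +oo%E; first by rewrite -cy.
  have Cfin : Cpsi \is a fin_num.
    by rewrite ge0_fin_numE// (lt_trans Ca)// ltry.
  pose beta := (fine Cpsi + alpha) / 2.
  have Cb : (fine Cpsi < beta) && (beta < alpha).
    by have [-> ->] := @midf_lt _ (fine Cpsi) alpha ltac:(by rewrite -lte_fin fineK).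
  case/andP: Cb => Cb ba.
  have hb : {ae (mu \x mu)%E, forall z, prox_gauge_pow dist T beta z = 0%E}.
    apply: filterS hc => z hz; apply: (@gpow_zero R X dist T d0 alpha beta z ba).
    by rewrite /prox_gauge_pow hz ltey.
  have : (beta%:E <= Cpsi)%E.
    apply: ereal_sup_ubound; right; exists beta => //; split => //.
    rewrite (le_lt_trans _ Cb)// -lee_fin fineK//.
  by rewrite leNgt -(fineK Cfin) lte_fin Cb.
Qed.
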